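(* Let $\Lambda$ be a left-artinian ring, $\mathcal{C}=\mathrm{mod}(\Lambda)$, and let $\alpha,\beta$ be radicals on $\mathcal{C}$ such that $\alpha$ preserves epimorphisms. Then $\ell\ell_{q_\beta}(M)\leq\ell\ell^\alpha(M)$ for every $M\in\mathcal{C}$ if and only if $\mathcal{F}_\alpha\subseteq\mathcal{T}_\beta$.
   Context: $\mathcal{C}$ is the category of finitely generated left $\Lambda$-modules; $\mathrm{rad}$, $\mathrm{soc}$ are the radical and socle functors. A pre-radical is an additive subfunctor $\alpha$ of the identity; $q_\alpha:=\mathrm{Id}/\alpha$; a radical is a pre-radical with $\alpha\circ q_\alpha=0$. $\mathcal{F}_\alpha=\{M:\alpha(M)=0\}$, $\mathcal{T}_\alpha=\{M:\alpha(M)=M\}$. For an additive functor $\gamma:\mathcal{C}\to\mathcal{C}$, $F_\gamma=\mathrm{rad}\circ\gamma$, $G_\gamma=\gamma/(\mathrm{soc}\circ\gamma)$ (so $G_\gamma(M)=\gamma(M)/\mathrm{soc}(\gamma(M))$), $\ell\ell^\gamma(M)=\min\{i\geq0:\gamma\circ F_\gamma^{\,i}(M)=0\}$ and $\ell\ell_\gamma(M)=\min\{i\geq0:\gamma\circ G_\gamma^{\,i}(M)=0\}$ (with $\min\emptyset=\infty$). *)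

(* Defs.v *)
From HB Require Import structures.
From mathcomp Require Import all_boot all_order all_algebra.
From mathcomp Require Import boolp.

Set Implicit Arguments.
Unset Strict Implicit.
Unset Printing Implicit Defensive.

Import GRing.Theory.
Local Open Scope ring_scope.

Section Gen.
Variables (R : pzRingType) (M : lmodType R).

Definition is_submod (P : pred M) : Prop :=
  [/\ 0 \in P, (forall x y, x \in P -> y \in P -> x + y \in P)
    & (forall (a : R) x, x \in P -> a *: x \in P)].

Definition gen (P : pred M) : pred M :=
  fun x => `[< forall Q : pred M, is_submod Q -> {subset P <= Q} -> x \in Q >].

Lemma genP P x :
  reflect (forall Q : pred M, is_submod Q -> {subset P <= Q} -> x \in Q) (x \in gen P).
Proof. exact: asboolP. Qed.

Lemma gen0 P : 0 \in gen P.
Proof. by apply/genP => Q []. Qed.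
Lemma genD P x y : x \in gen P -> y \in gen P -> x + y \in gen P.
Proof.
move=> /genP hx /genP hy; apply/genP => Q hQ sPQ.
by case: (hQ) => _ hD _; apply: hD; [apply: hx|apply: hy].
Qed.
Lemma genZ P a x : x \in gen P -> a *: x \in gen P.
Proof.
move=> /genP hx; apply/genP => Q hQ sPQ.
by case: (hQ) => _ _ hZ; apply: hZ; apply: hx.
Qed.
Lemma gen_submod P : is_submod (gen P).
Proof. by split; [apply: gen0 | apply: genD | apply: genZ]. Qed.
Lemma genN P x : x \in gen P -> - x \in gen P.
Proof. by move=> h; rewrite -scaleN1r; apply: genZ. Qed.
Lemma genB P x y : x \in gen P -> y \in gen P -> x - y \in gen P.
Proof. by move=> hx hy; apply: genD => //; apply: genN. Qed.

End Gen.

Section SubModule.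
Variables (R : pzRingType) (M : lmodType R) (P : pred M).

Definition subm_car := {x : M | x \in gen P}.
HB.instance Definition _ := Choice.copy subm_car {x : M | x \in gen P}.

Definition sm_zero : subm_car := exist _ 0 (gen0 P).
Definition sm_opp (x : subm_car) : subm_car :=
  exist _ (- sval x) (genN (svalP x)).
Definition sm_add (x y : subm_car) : subm_car :=
  exist _ (sval x + sval y) (genD (svalP x) (svalP y)).
Definition sm_scale (a : R) (x : subm_car) : subm_car :=
  exist _ (a *: sval x) (genZ a (svalP x)).

Lemma sm_inj (x y : subm_car) : sval x = sval y -> x = y.
Proof. by case: x y => [x hx] [y hy] /= e; subst y; rewrite (bool_irrelevance hx hy). Qed.

Lemma sm_addrA : associative sm_add.
Proof. by move=> x y z; apply: sm_inj; rewrite /= addrA. Qed.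
Lemma sm_addrC : commutative sm_add.
Proof. by move=> x y; apply: sm_inj; rewrite /= addrC. Qed.
Lemma sm_add0r : left_id sm_zero sm_add.
Proof. by move=> x; apply: sm_inj; rewrite /= add0r. Qed.
Lemma sm_addNr : left_inverse sm_zero sm_opp sm_add.
Proof. by move=> x; apply: sm_inj; rewrite /= addNr. Qed.

HB.instance Definition _ := GRing.isZmodule.Build subm_car
  sm_addrA sm_addrC sm_add0r sm_addNr.

Lemma sm_scalerA a b (v : subm_car) : sm_scale a (sm_scale b v) = sm_scale (a * b) v.
Proof. by apply: sm_inj; rewrite /= scalerA. Qed.
Lemma sm_scale1r : left_id 1 sm_scale.
Proof. by move=> v; apply: sm_inj; rewrite /= scale1r. Qed.
Lemma sm_scalerDr : right_distributive sm_scale +%R.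
Proof. by move=> a u v; apply: sm_inj; rewrite /= scalerDr. Qed.
Lemma sm_scalerDl (v : subm_car) : {morph sm_scale^~ v : a b / a + b}.
Proof. by move=> a b; apply: sm_inj; rewrite /= scalerDl. Qed.

HB.instance Definition _ := GRing.Zmodule_isLmodule.Build R subm_car
  sm_scalerA sm_scale1r sm_scalerDr sm_scalerDl.

End SubModule.

Definition subm (R : pzRingType) (M : lmodType R) (P : pred M) : lmodType R :=
  subm_car P.

(* The quotient module M / gen P (canonical representatives via choose)     *)
Section QuotModule.
Variables (R : pzRingType) (M : lmodType R) (P : pred M).

Local Notation N := (gen P).

Definition canon (x : M) : M := choose (fun y => x - y \in N) x.

Lemma canon_sub x : x - canon x \in N.
Proof. by apply: (@chooseP _ (fun y => x - y \in N)); rewrite subrr gen0. Qed.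

Lemma canon_eq x y : x - y \in N -> canon x = canon y.
Proof.
move=> hxy; rewrite /canon.
have e : (fun z => x - z \in N) =1 (fun z => y - z \in N).
  move=> z; apply/idP/idP => h.
  - have -> : y - z = (x - z) - (x - y) by rewrite opprB [RHS]addrC addrA subrK.
    by apply: genB.
  - have -> : x - z = (x - y) + (y - z) by rewrite addrA subrK.
    by apply: genD.
rewrite (eq_choose e); apply: choose_id.
- by rewrite -opprB genN.
- by rewrite subrr gen0.
Qed.

Lemma canon_idem x : canon (canon x) = canon x.
Proof. by apply: canon_eq; rewrite -opprB genN // canon_sub. Qed.

Definition quotm_car := {x : M | canon x == x}.
HB.instance Definition _ := Choice.copy quotm_car {x : M | canon x == x}.

Definition qpi (x : M) : quotm_car := exist _ (canon x) (introT eqP (canon_idem x)).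

Lemma qm_inj (x y : quotm_car) : sval x = sval y -> x = y.
Proof. by case: x y => [x hx] [y hy] /= e; subst y; rewrite (bool_irrelevance hx hy). Qed.

Lemma qpi_eq x y : x - y \in N -> qpi x = qpi y.
Proof. by move=> h; apply: qm_inj; rewrite /= (canon_eq h). Qed.

Lemma qpiK (q : quotm_car) : qpi (sval q) = q.
Proof. by apply: qm_inj; case: q => x /= /eqP. Qed.

Lemma canonB x : canon x - x \in N.
Proof. by rewrite -opprB genN // canon_sub. Qed.

Lemma qpiDl x y : qpi (canon x + y) = qpi (x + y).
Proof. by apply: qpi_eq; rewrite (addrC x y) addrKA canonB. Qed.
Lemma qpiDr x y : qpi (x + canon y) = qpi (x + y).
Proof. by rewrite addrC qpiDl addrC. Qed.
Lemma qpiZ a x : qpi (a *: canon x) = qpi (a *: x).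
Proof. by apply: qpi_eq; rewrite -scalerBr; apply: genZ; apply: canonB. Qed.

Definition qm_zero : quotm_car := qpi 0.
Definition qm_opp (x : quotm_car) : quotm_car := qpi (- sval x).
Definition qm_add (x y : quotm_car) : quotm_car := qpi (sval x + sval y).
Definition qm_scale (a : R) (x : quotm_car) : quotm_car := qpi (a *: sval x).

Lemma qm_addrA : associative qm_add.
Proof. by move=> x y z; rewrite /qm_add /= qpiDl qpiDr addrA. Qed.
Lemma qm_addrC : commutative qm_add.
Proof. by move=> x y; rewrite /qm_add addrC. Qed.
Lemma qm_add0r : left_id qm_zero qm_add.
Proof. by move=> x; rewrite /qm_add /qm_zero /= qpiDl add0r qpiK. Qed.
Lemma qm_addNr : left_inverse qm_zero qm_opp qm_add.
Proof. by move=> x; rewrite /qm_add /qm_opp /qm_zero /= qpiDl addNr. Qed.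

HB.instance Definition _ := GRing.isZmodule.Build quotm_car
  qm_addrA qm_addrC qm_add0r qm_addNr.

Lemma qm_scalerA a b (v : quotm_car) :
  qm_scale a (qm_scale b v) = qm_scale (a * b) v.
Proof. by rewrite /qm_scale /= qpiZ scalerA. Qed.
Lemma qm_scale1r : left_id 1 qm_scale.
Proof. by move=> v; rewrite /qm_scale scale1r qpiK. Qed.
Lemma qm_scalerDr' a u v :
  qm_scale a (qm_add u v) = qm_add (qm_scale a u) (qm_scale a v).
Proof. by rewrite /qm_scale /= /qm_add /= qpiZ qpiDl qpiDr scalerDr. Qed.
Lemma qm_scalerDr : right_distributive qm_scale +%R.
Proof. exact: qm_scalerDr'. Qed.
Lemma qm_scalerDl' (v : quotm_car) a b :
  qm_scale (a + b) v = qm_add (qm_scale a v) (qm_scale b v).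
Proof. by rewrite /qm_scale /= /qm_add /= qpiDl qpiDr scalerDl. Qed.
Lemma qm_scalerDl (v : quotm_car) : {morph qm_scale^~ v : a b / a + b}.
Proof. move=> a b; exact: qm_scalerDl'. Qed.

HB.instance Definition _ := GRing.Zmodule_isLmodule.Build R quotm_car
  qm_scalerA qm_scale1r qm_scalerDr qm_scalerDl.

End QuotModule.

Definition quotm (R : pzRingType) (M : lmodType R) (P : pred M) : lmodType R :=
  quotm_car P.

Section Notions.
Variable (R : pzRingType).

Definition left_ideal (I : pred R) : Prop :=
  [/\ 0 \in I, (forall x y, x \in I -> y \in I -> x + y \in I)
    & (forall r x, x \in I -> r * x \in I)].

Definition left_artinian : Prop :=
  forall I : nat -> pred R, (forall n, left_ideal (I n)) ->
    (forall n, {subset I n.+1 <= I n}) ->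
    exists n, forall m, (n <= m)%N -> I m =i I n.

Definition fingen (M : lmodType R) : Prop :=
  exists s : seq M, forall x : M,
    exists c : 'I_(size s) -> R, x = \sum_(i < size s) c i *: s`_i.

Definition zero_mod (M : lmodType R) : Prop := forall x : M, x = 0.

Definition maximal_sub (M : lmodType R) (N : pred M) : Prop :=
  [/\ is_submod N, (exists x, x \notin N)
    & forall K : pred M, is_submod K -> {subset N <= K} ->
        {subset K <= N} \/ (forall x, x \in K)].

Definition simple_sub (M : lmodType R) (S : pred M) : Prop :=
  [/\ is_submod S, (exists2 x, x \in S & x != 0)
    & forall K : pred M, is_submod K -> {subset K <= S} ->
        (forall x, x \in K -> x = 0) \/ {subset S <= K}].

Definition rad (M : lmodType R) : pred M :=
  fun x => `[< forall N : pred M, maximal_sub N -> x \in N >].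

Definition soc (M : lmodType R) : pred M :=
  gen (fun x : M => `[< exists2 S : pred M, simple_sub S & x \in S >]).

Local Unset Implicit Arguments.
Record preradical := Preradical {
  prad : forall M : lmodType R, {pred M};
  prad_submod : forall M : lmodType R, fingen M -> is_submod (prad M);
  prad_nat : forall (M N : lmodType R) (f : {linear M -> N}),
      fingen M -> fingen N -> forall x, x \in prad M -> f x \in prad N
}.
Local Set Implicit Arguments.

Definition pr_obj (a : preradical) (M : lmodType R) : lmodType R :=
  subm (prad a M).
(* q_alpha = Id / alpha (on objects) : M |-> M / alpha(M) *)
Definition q_obj (a : preradical) (M : lmodType R) : lmodType R :=
  quotm (prad a M).

Definition is_radical (a : preradical) : Prop :=
  forall M : lmodType R, fingen M -> zero_mod (pr_obj a (q_obj a M)).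

(* alpha preserves epimorphisms (epis of mod(R) = surjective maps) *)
Definition preserves_epi (a : preradical) : Prop :=
  forall (M N : lmodType R) (f : {linear M -> N}), fingen M -> fingen N ->
    (forall y, exists x, f x = y) ->
    forall y, y \in prad a N -> exists2 x, x \in prad a M & f x = y.

Definition in_F (a : preradical) (M : lmodType R) : Prop :=
  fingen M /\ forall x, x \in prad a M -> x = 0.
Definition in_T (a : preradical) (M : lmodType R) : Prop :=
  fingen M /\ forall x, x \in prad a M.

Definition F_obj (g : lmodType R -> lmodType R) (M : lmodType R) : lmodType R :=
  subm (@rad (g M)).
Definition G_obj (g : lmodType R -> lmodType R) (M : lmodType R) : lmodType R :=
  quotm (@soc (g M)).

End Notions.

(* min of a set of naturals, None = infinity (min of the empty set) *)
Definition ominn (P : nat -> Prop) : option nat :=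
  match pselect (exists n, `[< P n >]) with
  | left h => Some (ex_minn h)
  | right _ => None
  end.

Definition ole (a b : option nat) : bool :=
  match a, b with
  | _, None => true
  | None, Some _ => false
  | Some m, Some n => (m <= n)%N
  end.

Definition ll_up (R : pzRingType) (g : lmodType R -> lmodType R) (M : lmodType R)
  : option nat := ominn (fun i => zero_mod (g (iter i (F_obj g) M))).
Definition ll_low (R : pzRingType) (g : lmodType R -> lmodType R) (M : lmodType R)
  : option nat := ominn (fun i => zero_mod (g (iter i (G_obj g) M))).

(* Main.v *)
Require Import Defs.
From HB Require Import structures.
From mathcomp Require Import all_boot all_order all_algebra.
From mathcomp Require Import boolp wochoice.
Set Implicit Arguments.
Unset Strict Implicit.
Unset Printing Implicit Defensive.
Import GRing.Theory.
Local Open Scope ring_scope.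
Section Sub.
Variables (R : pzRingType) (M : lmodType R).
Implicit Types (P Q A B K L N : pred M) (x y z : M).

Lemma sm0 P : is_submod P -> 0 \in P. Proof. by case. Qed.
Lemma smD P x y : is_submod P -> x \in P -> y \in P -> x + y \in P.
Proof. by case=> _ h _; apply: h. Qed.
Lemma smZ P a x : is_submod P -> x \in P -> a *: x \in P.
Proof. by case=> _ _ h; apply: h. Qed.
Lemma smN P x : is_submod P -> x \in P -> - x \in P.
Proof. by move=> hP hx; rewrite -scaleN1r; apply: smZ. Qed.
Lemma smB P x y : is_submod P -> x \in P -> y \in P -> x - y \in P.
Proof. by move=> hP hx hy; apply: smD => //; apply: smN. Qed.
Lemma smBr P x y : is_submod P -> x - y \in P -> y \in P -> x \in P.
Proof. by move=> hP h hy; rewrite -(subrK y x); apply: smD. Qed.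
Lemma smsum P (I : Type) (r : seq I) (F : I -> M) :
  is_submod P -> (forall i, F i \in P) -> \sum_(i <- r) F i \in P.
Proof.
move=> hP hF; elim: r => [|i r IH]; first by rewrite big_nil sm0.
by rewrite big_cons smD.
Qed.

Definition zp : pred M := fun x => x == 0.
Lemma zpE x : (x \in zp) = (x == 0). Proof. by []. Qed.
Lemma zp_submod : is_submod zp.
Proof.
split; first by rewrite zpE.
- by move=> x y; rewrite !zpE => /eqP-> /eqP->; rewrite addr0.
- by move=> a x; rewrite !zpE => /eqP->; rewrite scaler0.
Qed.

Definition topp : pred M := predT.
Lemma topp_submod : is_submod topp. Proof. by split. Qed.

Lemma predI_submod P Q : is_submod P -> is_submod Q -> is_submod (predI P Q).
Proof.
move=> hP hQ; split.
- by apply/andP; split; apply: sm0.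
- move=> x y /andP[? ?] /andP[? ?]; apply/andP; split; exact: smD.
- move=> a x /andP[? ?]; apply/andP; split; exact: smZ.
Qed.

Definition addp P Q : pred M :=
  fun x => `[< exists p q, [/\ p \in P, q \in Q & x = p + q] >].
Lemma addpP P Q x :
  reflect (exists p q, [/\ p \in P, q \in Q & x = p + q]) (x \in addp P Q).
Proof. exact: asboolP. Qed.
Lemma addp_submod P Q : is_submod P -> is_submod Q -> is_submod (addp P Q).
Proof.
move=> hP hQ; split.
- by apply/addpP; exists 0, 0; rewrite !sm0 // addr0.
- move=> x y /addpP[p [q [hp hq ->]]] /addpP[p' [q' [hp' hq' ->]]].
  apply/addpP; exists (p + p'), (q + q'); split; try exact: smD.
  by rewrite addrACA.
- move=> a x /addpP[p [q [hp hq ->]]]; apply/addpP; exists (a *: p), (a *: q).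
  by split; rewrite ?smZ // scalerDr.
Qed.
Lemma addpl P Q x : is_submod Q -> x \in P -> x \in addp P Q.
Proof. by move=> hQ hx; apply/addpP; exists x, 0; rewrite sm0 // addr0. Qed.
Lemma addpr P Q x : is_submod P -> x \in Q -> x \in addp P Q.
Proof. by move=> hP hx; apply/addpP; exists 0, x; rewrite sm0 // add0r. Qed.
Lemma addp_min P Q K : is_submod K -> {subset P <= K} -> {subset Q <= K} ->
  {subset addp P Q <= K}.
Proof. by move=> hK hP hQ x /addpP[p [q [/hP hp /hQ hq ->]]]; apply: smD. Qed.
Lemma addpS P Q P' Q' : {subset P <= P'} -> {subset Q <= Q'} ->
  {subset addp P Q <= addp P' Q'}.
Proof.
by move=> h1 h2 x /addpP[p [q [/h1 hp /h2 hq ->]]]; apply/addpP; exists p, q.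
Qed.

Lemma gen_min P K : is_submod K -> {subset P <= K} -> {subset gen P <= K}.
Proof. by move=> hK hPK x /genP; apply. Qed.
Lemma gen_sub P : {subset P <= gen P}.
Proof. by move=> x hx; apply/genP => K _; apply. Qed.
Lemma gen_id P x : is_submod P -> (x \in gen P) = (x \in P).
Proof.
move=> hP; apply/idP/idP; last exact: gen_sub.
by apply: gen_min.
Qed.
Lemma genS P Q : {subset P <= Q} -> {subset gen P <= gen Q}.
Proof.
move=> h; apply: gen_min; first exact: gen_submod.
by move=> x /h; apply: gen_sub.
Qed.

Lemma modular A L N x : is_submod A -> is_submod L -> {subset N <= L} ->
  x \in L -> x \in addp N A -> x \in addp N (predI L A).
Proof.
move=> hA hL hNL hx /addpP[n [a [hn ha e]]]; apply/addpP; exists n, a; split=> //.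
apply/andP; split=> //.
have -> : a = x - n by rewrite e addrC addKr.
by apply: smB => //; apply: hNL.
Qed.

End Sub.

Arguments zp {R M}.
Arguments topp {R M}.

Section Img.
Variables (R : pzRingType) (M N : lmodType R) (f : {linear M -> N}).

Definition imgp (P : pred M) : pred N :=
  fun y => `[< exists2 x, x \in P & f x = y >].
Lemma imgpP P y : reflect (exists2 x, x \in P & f x = y) (y \in imgp P).
Proof. exact: asboolP. Qed.
Lemma imgp_submod P : is_submod P -> is_submod (imgp P).
Proof.
move=> hP; split.
- by apply/imgpP; exists 0; rewrite ?sm0 ?linear0.
- move=> _ _ /imgpP[x hx <-] /imgpP[y hy <-]; apply/imgpP; exists (x + y).
    exact: smD. by rewrite linearD.
- move=> a _ /imgpP[x hx <-]; apply/imgpP; exists (a *: x).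
    exact: smZ. by rewrite linearZ.
Qed.
Lemma imgp_in P x : x \in P -> f x \in imgp P.
Proof. by move=> hx; apply/imgpP; exists x. Qed.

Definition prep (Q : pred N) : pred M := fun x => f x \in Q.
Lemma prepE Q x : (x \in prep Q) = (f x \in Q). Proof. by []. Qed.
Lemma prep_submod Q : is_submod Q -> is_submod (prep Q).
Proof.
move=> hQ; split; rewrite /prep.
- by rewrite prepE linear0 sm0.
- by move=> x y; rewrite !prepE linearD; apply: smD.
- by move=> a x; rewrite !prepE linearZ; apply: smZ.
Qed.

Lemma img_gen P : {subset imgp (gen P) <= gen (imgp P)}.
Proof.
move=> _ /imgpP[x hx <-].
have : x \in prep (gen (imgp P)).
  apply: (gen_min (prep_submod (gen_submod _))) hx => z hz.
  by rewrite prepE; apply: gen_sub; apply: imgp_in.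
by [].
Qed.

End Img.

Section L.
Variables (R : pzRingType) (U V : lmodType R).
Definition mklin (f : U -> V) (h : linear f) : {linear U -> V} :=
  HB.pack f (GRing.isLinear.Build R U V *:%R f h).
Lemma mklinE f h x : @mklin f h x = f x. Proof. by []. Qed.
End L.

Section SQ.
Variables (R : pzRingType) (M : lmodType R) (P : pred M).

Lemma incl_lin : linear (fun x : subm P => sval x). Proof. by []. Qed.
Definition incl : {linear subm P -> M} := mklin incl_lin.
Lemma inclE x : incl x = sval x. Proof. by []. Qed.
Lemma incl_inj : injective incl.
Proof. by move=> x y h; apply: (@sm_inj _ _ P). Qed.
Lemma incl_in (x : subm P) : incl x \in gen P.
Proof. by case: x. Qed.
Lemma incl_surj x : x \in gen P -> exists y : subm P, incl y = x.
Proof. by move=> hx; exists (exist _ x hx). Qed.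
Lemma subm0 : sval (0 : subm P) = 0. Proof. by []. Qed.

Lemma zero_subm : zero_mod (subm P) <-> forall x, x \in gen P -> x = 0.
Proof.
split=> h.
- by move=> x hx; have := h (exist _ x hx); move/(congr1 sval).
- by move=> [x hx]; apply: sm_inj => /=; apply: h.
Qed.

Lemma qpi_lin : linear (@qpi R M P).
Proof.
move=> a x y.
have -> : a *: qpi P x + qpi P y = qm_add (qm_scale a (qpi P x)) (qpi P y) by [].
rewrite /qm_add /qm_scale /= qpiDl qpiDr; apply: qpi_eq.
by rewrite opprD addrACA addrN addr0 -scalerBr genZ // canon_sub.
Qed.
Definition qproj : {linear M -> quotm P} := mklin qpi_lin.
Lemma qprojE x : qproj x = qpi P x. Proof. by []. Qed.
Lemma qproj_surj (y : quotm P) : exists x, qproj x = y.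
Proof. by exists (sval y); rewrite qprojE qpiK. Qed.

Lemma qproj0 x : (qproj x == 0) = (x \in gen P).
Proof.
apply/eqP/idP => [h|h].
- have e : Defs.canon P x = Defs.canon P 0 by have := congr1 sval h.
  have h1 := canon_sub P x; have h2 := canon_sub P 0.
  rewrite e in h1; rewrite sub0r in h2.
  by have := genB h1 h2; rewrite opprK subrK.
- by rewrite qprojE; apply: qpi_eq; rewrite subr0.
Qed.

Lemma zero_quotm : zero_mod (quotm P) <-> forall x, x \in gen P.
Proof.
split=> h.
- by move=> x; rewrite -qproj0 (h (qproj x)).
- by move=> y; have [x <-] := qproj_surj y; apply/eqP; rewrite qproj0.
Qed.

End SQ.

Section FG.
Variables (R : pzRingType).

Definition spn (M : lmodType R) (s : seq M) : pred M := gen (fun y => y \in s).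

Lemma fingenP (M : lmodType R) :
  fingen M <-> exists s : seq M, forall x, x \in spn s.
Proof.
split=> [[s hs]|[s hs]].
- exists s => x; have [c ->] := hs x.
  apply: smsum; first exact: gen_submod.
  move=> i; apply: genZ; apply: gen_sub; exact: mem_nth.
- exists s.
  pose C : pred M := fun x => `[< exists c : 'I_(size s) -> R,
                                     x = \sum_(i < size s) c i *: s`_i >].
  have hC : is_submod C.
    split.
    + by apply/asboolP; exists (fun _ => 0); rewrite big1 // => i _; rewrite scale0r.
    + move=> x y /asboolP[c ->] /asboolP[d ->]; apply/asboolP.
      by exists (fun i => c i + d i); rewrite -big_split /=; apply: eq_bigr => i _; rewrite scalerDl.
    + move=> a x /asboolP[c ->]; apply/asboolP; exists (fun i => a * c i).
      by rewrite scaler_sumr; apply: eq_bigr => i _; rewrite scalerA.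
  move=> x; suff /asboolP : x \in C by [].
  apply: (gen_min hC _ (hs x)).
  move=> y ys; apply/asboolP.
  exists (fun i => if val i == index y s then 1 else 0).
  have hi : (index y s < size s)%N by rewrite index_mem.
  rewrite (bigD1 (Ordinal hi)) //= eqxx scale1r nth_index // big1 ?addr0 //.
  move=> i; rewrite -val_eqE /= => /negbTE ->; by rewrite scale0r.
Qed.

Lemma fingen_img (M N : lmodType R) (f : {linear M -> N}) :
  fingen M -> (forall y, exists x, f x = y) -> fingen N.
Proof.
move=> /fingenP[s hs] hf; apply/fingenP; exists (map f s) => y.
have [x <-] := hf y.
have : f x \in imgp f (spn s) by apply: imgp_in.
move/img_gen; apply: genS => z /imgpP[w ws <-]; exact: map_f.
Qed.

Lemma fingen_quotm (M : lmodType R) (P : pred M) : fingen M -> fingen (quotm P).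
Proof. by move=> h; apply: (fingen_img (f := qproj P)) => //; apply: qproj_surj. Qed.

Lemma lift_seq (M : lmodType R) (P : pred M) (s : seq M) :
  (forall x, x \in s -> x \in gen P) -> exists t : seq (subm P), map (incl P) t = s.
Proof.
elim: s => [|x s IH] h; first by exists [::].
have [|t ht] := IH; first by move=> y ys; apply: h; rewrite inE ys orbT.
have hx : x \in gen P by apply: h; rewrite inE eqxx.
by exists (exist _ x hx :: t); rewrite /= ht.
Qed.

Lemma fingen_subm (M : lmodType R) (P : pred M) (s : seq M) :
  (forall x, x \in s -> x \in gen P) -> {subset gen P <= spn s} -> fingen (subm P).
Proof.
move=> hs hP; have [t ht] := lift_seq hs.
apply/fingenP; exists t => y.
have : incl P y \in imgp (incl P) (spn t).
  have hy := hP _ (incl_in y).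
  have : {subset spn s <= imgp (incl P) (spn t)}.
    apply: gen_min; first by apply: imgp_submod; apply: gen_submod.
    move=> z; rewrite -ht => /mapP[w wt ->]; apply: imgp_in; exact: gen_sub.
  by move/(_ _ hy).
by move=> /imgpP[w hw /incl_inj <-].
Qed.

End FG.

Lemma notsubset (T : Type) (P Q : pred T) :
  ~ {subset P <= Q} -> exists2 x, x \in P & x \notin Q.
Proof.
move=> h; apply: contrapT => h'; apply: h => x hx; apply: contrapT => hq.
by apply: h'; exists x => //; apply/negP.
Qed.

Section Chains.
Variables (R : pzRingType) (M : lmodType R).
Implicit Types (A B C N U L K : pred M) (x y : M).

Definition noeth A B := forall L : nat -> pred M,
  (forall n, is_submod (L n)) -> (forall n, {subset A <= L n}) ->
  (forall n, {subset L n <= B}) -> (forall n, {subset L n <= L n.+1}) ->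
  exists n, forall m, (n <= m)%N -> {subset L m <= L n}.
Definition artin A B := forall L : nat -> pred M,
  (forall n, is_submod (L n)) -> (forall n, {subset A <= L n}) ->
  (forall n, {subset L n <= B}) -> (forall n, {subset L n.+1 <= L n}) ->
  exists n, forall m, (n <= m)%N -> {subset L n <= L m}.

Lemma incr_mono (L : nat -> pred M) : (forall n, {subset L n <= L n.+1}) ->
  forall n m, (n <= m)%N -> {subset L n <= L m}.
Proof.
move=> h n m le; rewrite -(subnKC le); elim: (m - n)%N => [|k IH] x hx.
  by rewrite addn0.
by rewrite addnS; apply: h; apply: IH.
Qed.
Lemma decr_mono (L : nat -> pred M) : (forall n, {subset L n.+1 <= L n}) ->
  forall n m, (n <= m)%N -> {subset L m <= L n}.
Proof.
move=> h n m le; rewrite -(subnKC le); elim: (m - n)%N => [|k IH] x.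
  by rewrite addn0.
by rewrite addnS => /h; apply: IH.
Qed.

Lemma noeth_ext A B C : is_submod B -> is_submod C -> {subset A <= B} ->
  {subset B <= C} -> noeth A B -> noeth B C -> noeth A C.
Proof.
move=> hB hC hAB hBC nAB nBC L hL hA hLC hinc.
have [n1 h1] := nAB (fun n => predI (L n) B) (fun n => predI_submod (hL n) hB)
  (fun n x hx => introT andP (conj (hA n x hx) (hAB x hx)))
  (fun n x hx => proj2 (andP hx))
  (fun n x hx => introT andP (conj (hinc n x (proj1 (andP hx))) (proj2 (andP hx)))).
have [n2 h2] := nBC (fun n => addp (L n) B) (fun n => addp_submod (hL n) hB)
  (fun n x hx => addpr (hL n) hx) (fun n => addp_min hC (@hLC n) hBC)
  (fun n => addpS (hinc n) (fun x h => h)).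
exists (maxn n1 n2) => m hm x hx.
have hx2 : x \in addp (L (maxn n1 n2)) B.
  have /(h2 m (leq_trans (leq_maxr _ _) hm)) hx' := addpl (P := L m) hB hx.
  exact: (addpS (incr_mono hinc (leq_maxr n1 n2)) (fun y h => h)) hx'.
case/addpP: hx2 => l [b [hl hb e]].
have hlm : l \in L m := incr_mono hinc hm hl.
have hbm : b \in predI (L m) B.
  apply/andP; split=> //.
  have -> : b = x - l by rewrite e addrC addKr.
  exact: smB.
have /andP[hb1 _] := h1 m (leq_trans (leq_maxl _ _) hm) _ hbm.
rewrite e; apply: smD => //; exact: (incr_mono hinc (leq_maxl n1 n2)).
Qed.

Lemma artin_ext A B C : is_submod B -> is_submod C -> {subset A <= B} ->
  {subset B <= C} -> artin A B -> artin B C -> artin A C.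
Proof.
move=> hB hC hAB hBC nAB nBC L hL hA hLC hdec.
have [n1 h1] := nAB (fun n => predI (L n) B) (fun n => predI_submod (hL n) hB)
  (fun n x hx => introT andP (conj (hA n x hx) (hAB x hx)))
  (fun n x hx => proj2 (andP hx))
  (fun n x hx => introT andP (conj (hdec n x (proj1 (andP hx))) (proj2 (andP hx)))).
have [n2 h2] := nBC (fun n => addp (L n) B) (fun n => addp_submod (hL n) hB)
  (fun n x hx => addpr (hL n) hx) (fun n => addp_min hC (@hLC n) hBC)
  (fun n => addpS (hdec n) (fun x h => h)).
exists (maxn n1 n2) => m hm x hx.
have hx2 : x \in addp (L m) B.
  apply: (h2 m (leq_trans (leq_maxr _ _) hm)).
  apply: (addpS (decr_mono hdec (leq_maxr n1 n2)) (fun y h => h)).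
  exact: addpl.
case/addpP: hx2 => l [b [hl hb e]].
have hlN : l \in L (maxn n1 n2) := decr_mono hdec hm hl.
have hbN : b \in predI (L (maxn n1 n2)) B.
  apply/andP; split=> //.
  have -> : b = x - l by rewrite e addrC addKr.
  exact: smB.
have hbn1 : b \in predI (L n1) B.
  case/andP: hbN => hb1 hb2; apply/andP; split=> //.
  exact: (decr_mono hdec (leq_maxl n1 n2)).
have /andP[hb3 _] := h1 m (leq_trans (leq_maxl _ _) hm) _ hbn1.
by rewrite e; apply: smD.
Qed.

Lemma noeth_sub A A' B B' : {subset A <= A'} -> {subset B' <= B} ->
  noeth A B -> noeth A' B'.
Proof.
move=> h1 h2 nAB L hL hA hB hinc; apply: nAB => // n x.
  by move/h1; apply: hA.
by move/hB; apply: h2.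
Qed.
Lemma artin_sub A A' B B' : {subset A <= A'} -> {subset B' <= B} ->
  artin A B -> artin A' B'.
Proof.
move=> h1 h2 nAB L hL hA hB hinc; apply: nAB => // n x.
  by move/h1; apply: hA.
by move/hB; apply: h2.
Qed.

Lemma noeth_two A B :
  (forall L, is_submod L -> {subset A <= L} -> {subset L <= B} ->
     {subset L <= A} \/ {subset B <= L}) -> noeth A B.
Proof.
move=> h L hL hA hB hinc.
case: (pselect (exists n, {subset B <= L n})) => [[n hn]|hn].
  by exists n => m _ x /hB; apply: hn.
exists 0%N => m _ x hx.
case: (h (L m) (hL m) (hA m) (@hB m)) => [h'|h']; first by apply: hA; apply: h'.
by exfalso; apply: hn; exists m.
Qed.

Definition goodZ A B x (N : pred M) :=
  [/\ is_submod N, {subset A <= N}, {subset N <= B} & x \notin N].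
Definition TZ A B x := {N : pred M | `[< goodZ A B x N >]}.
HB.instance Definition _ A B x := gen_eqMixin (TZ A B x).

Lemma ZLx A B x : is_submod A -> {subset A <= B} -> x \notin A ->
  exists N, [/\ is_submod N, {subset A <= N}, {subset N <= B}, x \notin N &
    forall L, is_submod L -> {subset N <= L} -> {subset L <= B} -> x \notin L ->
      {subset L <= N}].
Proof.
move=> hA hAB hxA.
have gA : `[< goodZ A B x A >] by apply/asboolP; split.
pose t0 : TZ A B x := exist _ A gA.
pose Rl (s t : TZ A B x) := `[< {subset sval s <= sval t} >].
have gs (s : TZ A B x) : goodZ A B x (sval s) by case: s => N /= /asboolP.
have Zr : {in predT, reflexive Rl} by move=> t _; apply/asboolP.
have Zt : {in predT & &, transitive Rl}.
  by move=> s r t _ _ _ /asboolP h1 /asboolP h2; apply/asboolP => y /h1 /h2.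
have [C _ hC|t _ ht] := @Zorn's_lemma (TZ A B x) Rl predT Zr Zt.
  case: (pselect (exists s, s \in C)) => [[s0 hs0]|hne]; last first.
    by exists t0 => // s hs; exfalso; apply: hne; exists s.
  have Ctot s1 s2 : s1 \in C -> s2 \in C -> Rl s1 s2 \/ Rl s2 s1.
    move=> h1 h2.
    have hsub : {subset pred2 s1 s2 <= C} by move=> y /pred2P[]->.
    have hne : nonempty (pred2 s1 s2) by exists s1; rewrite inE eqxx.
    have [z [[hz hlz] _]] := hC _ hsub hne.
    case/pred2P: hz => ->{z} in hlz.
      by left; apply: hlz; rewrite inE eqxx orbT.
    by right; apply: hlz; rewrite inE eqxx.
  pose U : pred M := fun y => `[< exists s, s \in C /\ y \in sval s >].
  have hU : goodZ A B x U.
    split.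
    + split.
      * by apply/asboolP; exists s0; split=> //; have [[]] := gs s0.
      * move=> y z /asboolP[s1 [hs1 hy]] /asboolP[s2 [hs2 hz]].
        apply/asboolP; case: (Ctot _ _ hs1 hs2) => /asboolP hsub.
          exists s2; split=> //; apply: smD; [by have [] := gs s2| exact: hsub|by []].
        exists s1; split=> //; apply: smD; [by have [] := gs s1| by [] | exact: hsub].
      * move=> a y /asboolP[s1 [hs1 hy]]; apply/asboolP; exists s1; split=> //.
        by apply: smZ => //; have [] := gs s1.
    + by move=> y hy; apply/asboolP; exists s0; split=> //; have [_ h _ _] := gs s0; apply: h.
    + by move=> y /asboolP[s1 [_ hy]]; have [_ _ h _] := gs s1; apply: h.
    + apply/negP => /asboolP[s1 [_ hy]]; have [_ _ _ h] := gs s1.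
      by rewrite hy in h.
  have gU : `[< goodZ A B x U >] by apply/asboolP.
  exists (exist _ U gU) => // s hs; apply/asboolP => y hy /=.
  by apply/asboolP; exists s.
case: t ht => N gN ht.
have [hN hAN hNB hxN] : goodZ A B x N by apply/asboolP.
exists N; split=> // L hL hNL hLB hxL.
have gL : `[< goodZ A B x L >].
  by apply/asboolP; split=> // y /hAN /hNL.
have := ht (exist _ L gL) isT (introT (asboolP _) hNL).
by move/asboolP.
Qed.

End Chains.

Section SS.
Variables (R : pzRingType) (M : lmodType R).
Implicit Types (A B C N U L K T : pred M) (x y : M).

Definition simp A T := is_submod T /\ forall L, is_submod L -> {subset A <= L} ->
  {subset L <= addp A T} -> {subset L <= A} \/ {subset T <= L}.
Definition ssoB A B : pred M :=
  gen (fun y => `[< y \in A \/ exists T, [/\ simp A T, {subset T <= B} & y \in T] >]).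
Definition cosimp U N := forall L, is_submod L -> {subset predI U N <= L} ->
  {subset L <= U} -> {subset L <= N} \/ {subset U <= L}.
Fixpoint allL (Q : pred M -> Prop) (Ns : seq (pred M)) : Prop :=
  if Ns is N :: Ns' then Q N /\ allL Q Ns' else True.
Definition capl U (Ns : seq (pred M)) : pred M :=
  fun y => `[< y \in U /\ allL (fun N => y \in N) Ns >].

Lemma ssoB_A A B x : x \in A -> x \in ssoB A B.
Proof. by move=> hx; apply: gen_sub; apply/asboolP; left. Qed.
Lemma ssoB_T A B T x : simp A T -> {subset T <= B} -> x \in T -> x \in ssoB A B.
Proof. by move=> h1 h2 hx; apply: gen_sub; apply/asboolP; right; exists T. Qed.

Lemma ssoB_ext A A' B B' : A =i A' -> {subset B <= B'} -> {subset ssoB A B <= ssoB A' B'}.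
Proof.
move=> e hB; apply: gen_min; first exact: gen_submod.
move=> y /asboolP[hy|[T [[hT hs] hTB hy]]].
  by apply: ssoB_A; rewrite -e.
apply: (ssoB_T (T := T)) => //; last by move=> z /hTB /hB.
split=> // L hL h1 h2.
have h1' : {subset A <= L} by move=> z; rewrite e; apply: h1.
have h2' : {subset L <= addp A T}.
  by move=> z /h2; apply: addpS => // w; rewrite e.
case: (hs L hL h1' h2') => h; [left|right] => //.
by move=> z /h; rewrite e.
Qed.

Lemma caplP U Ns y : reflect (y \in U /\ allL (fun N => y \in N) Ns) (y \in capl U Ns).
Proof. exact: asboolP. Qed.

Lemma capl_submod U Ns : is_submod U -> allL (@is_submod R M) Ns ->
  is_submod (capl U Ns).
Proof.
move=> hU hNs; split.
- apply/caplP; split; first exact: sm0.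
  by elim: Ns hNs => //= N Ns IH [hN /IH]; split=> //; apply: sm0.
- move=> x y /caplP[hx ax] /caplP[hy ay]; apply/caplP; split; first exact: smD.
  elim: Ns hNs ax ay => //= N Ns IH [hN hNs] [hxN ax] [hyN ay].
  by split; [apply: smD | apply: IH].
- move=> a x /caplP[hx ax]; apply/caplP; split; first exact: smZ.
  elim: Ns hNs ax => //= N Ns IH [hN hNs] [hxN ax].
  by split; [apply: smZ | apply: IH].
Qed.

Lemma capl_sub U Ns : {subset capl U Ns <= U}.
Proof. by move=> y /caplP[]. Qed.

Lemma capl_cons U N Ns : capl U (N :: Ns) =i capl (predI U N) Ns.
Proof.
move=> y; apply/caplP/caplP => /= [[hU [hN a]]|[/andP[hU hN] a]].
  by split=> //; apply/andP.
by [].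
Qed.

Lemma capl_nil U : capl U [::] =i U.
Proof. by move=> y; apply/caplP/idP => [[]|] //. Qed.

Lemma cosimp_cap U N N' : is_submod U -> is_submod N -> is_submod N' ->
  cosimp U N' -> cosimp (predI U N) N'.
Proof.
move=> hU hN hN' hc L hL h1 h2.
case: (pselect {subset L <= N'}) => [h|/notsubset[l hl hlN']]; first by left.
right.
have hUN' := predI_submod hU hN'.
have hL'' := addp_submod hUN' hL.
have s1 : {subset predI U N' <= addp (predI U N') L} by move=> z hz; apply: addpl.
have s2 : {subset addp (predI U N') L <= U}.
  apply: addp_min => // z; first by case/andP.
  by move/h2/andP=> [].
case: (hc _ hL'' s1 s2) => [h|h].
  by exfalso; move: hlN'; rewrite h //; apply: addpr.
move=> u hu; have /andP[huU huN] := hu.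
case/addpP: (h u huU) => a [l' [ha hl' e]].
have hl'N : l' \in N by have /andP[] := h2 _ hl'.
have haN : a \in N.
  have -> : a = u - l' by rewrite e addrK.
  exact: smB.
have haL : a \in L.
  apply: h1; apply/andP; split; last by case/andP: ha.
  by apply/andP; split=> //; case/andP: ha.
by rewrite e; apply: smD.
Qed.

Lemma allL_impl (P Q : pred M -> Prop) Ns :
  (forall N, P N -> Q N) -> allL P Ns -> allL Q Ns.
Proof. by move=> h; elim: Ns => //= N Ns IH [/h ? /IH ?]. Qed.

Lemma ULem Ns : forall U, is_submod U ->
  allL (fun N => is_submod N /\ cosimp U N) Ns -> {subset U <= ssoB (capl U Ns) U}.
Proof.
elim: Ns => [|N Ns IH] U hU hNs.
  by move=> x hx; apply: ssoB_A; rewrite capl_nil.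
case: hNs => [[hN hcN] hNs].
have hsNs : allL (@is_submod R M) Ns by apply: allL_impl hNs => N' [].
have hK := capl_submod hU hsNs.
set K := capl U Ns in hK *.
have IH1 := IH U hU hNs.
have hNs' : allL (fun N' => is_submod N' /\ cosimp (predI U N) N') Ns.
  by apply: allL_impl hNs => N' [h1 h2]; split=> //; apply: cosimp_cap.
have IH2 := IH (predI U N) (predI_submod hU hN) hNs'.
have eA := capl_cons U N Ns.
set A := capl U (N :: Ns) in eA *.
have hAK : {subset A <= K}.
  by move=> y /caplP[hy [_ a]]; apply/caplP.
have hKU : {subset K <= U} by apply: capl_sub.
have hKNA : forall y, y \in K -> y \in N -> y \in A.
  by move=> y /caplP[hy a] hyN; apply/caplP.
case: (pselect {subset K <= N}) => [hKN|/notsubset[k hk hkN]].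
  move=> x /IH1; apply: ssoB_ext => // y.
  apply/idP/idP; first by move=> hy; apply: hKNA => //; apply: hKN.
  exact: hAK.
have sK : simp A K.
  split=> // L hL h1 h2.
  have hLK : {subset L <= K}.
    by move=> y /h2; apply: addp_min.
  case: (pselect {subset L <= N}) => [hLN|/notsubset[l hl hlN]].
    by left=> y hy; apply: hKNA; [apply: hLK|apply: hLN].
  right.
  have hS := addp_submod (predI_submod hU hN) hL.
  have s1 : {subset predI U N <= addp (predI U N) L} by move=> z hz; apply: addpl.
  have s2 : {subset addp (predI U N) L <= U}.
    apply: addp_min => // z; first by case/andP.
    by move/hLK/hKU.
  case: (hcN _ hS s1 s2) => [h|h].
    by exfalso; move: hlN; rewrite h //; apply: addpr => //; apply: predI_submod.
  move=> k' hk'; case/addpP: (h _ (hKU _ hk')) => n [l' [hn hl' e]].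
  have hnK : n \in K.
    have -> : n = k' - l' by rewrite e addrK.
    by apply: smB => //; apply: hLK.
  have hnA : n \in A by apply: hKNA => //; case/andP: hn.
  by rewrite e; apply: smD => //; apply: h1.
have hS := addp_submod (predI_submod hU hN) hK.
have s1 : {subset predI U N <= addp (predI U N) K} by move=> z hz; apply: addpl.
have s2 : {subset addp (predI U N) K <= U}.
  by apply: addp_min => // z; case/andP.
have hUNK : {subset U <= addp (predI U N) K}.
  case: (hcN _ hS s1 s2) => [h|//].
  by exfalso; move: hkN; rewrite h //; apply: addpr => //; apply: predI_submod.
move=> x /hUNK /addpP[n [k' [hn hk' ->]]].
apply: smD; first exact: gen_submod.
  apply: (ssoB_ext (A := capl (predI U N) Ns) (B := predI U N)).
  - by move=> y; rewrite eA.
  - by move=> y /andP[].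
  - exact: IH2.
by apply: (ssoB_T sK).
Qed.

End SS.

Section JJ.
Variables (R : pzRingType) (M : lmodType R) (Jp : pred R^o).
Hypothesis hJs : is_submod Jp.
Hypothesis hJ1 : (1 : R^o) \in ssoB Jp topp.
Implicit Types (A B C N U L K T : pred M) (x y : M).

Lemma rmul_lin (b : M) : linear (fun r : R^o => (r : R) *: b).
Proof. by move=> a r s; rewrite scalerDl scalerA. Qed.

Lemma ssoB_submod A B : is_submod (ssoB A B). Proof. exact: gen_submod. Qed.

Lemma J3 A B b : is_submod A -> is_submod B -> {subset A <= B} ->
  (forall (j : R) x, j \in Jp -> x \in B -> j *: x \in A) -> b \in B -> b \in ssoB A B.
Proof.
move=> hA hB hAB hJB hb.
pose phi : {linear R^o -> M} := mklin (rmul_lin b).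
have phiE (r : R^o) : phi r = (r : R) *: b by [].
have hP := prep_submod phi (ssoB_submod A B).
suff : (1 : R^o) \in prep phi (ssoB A B) by rewrite prepE phiE scale1r.
apply: (gen_min hP) hJ1 => r /asboolP[hr|[T [[hT hsT] _ hrT]]].
  by rewrite prepE phiE; apply: ssoB_A; apply: hJB.
rewrite prepE phiE.
have hTb := imgp_submod phi hT.
apply: (ssoB_T (T := imgp phi T)); last by apply: imgp_in.
  split=> // L hL h1 h2.
  pose I : pred R^o := predI (prep phi L) (addp Jp T).
  have hI : is_submod I := predI_submod (prep_submod phi hL) (addp_submod hJs hT).
  have hJI : {subset Jp <= I}.
    move=> j hj; apply/andP; split; last by apply: addpl.
    by change (phi j \in L); rewrite phiE; apply: h1; apply: hJB.
  have hIJT : {subset I <= addp Jp T} by move=> z /andP[].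
  case: (hsT I hI hJI hIJT) => [hIJ|hTI]; [left|right].
    move=> y hy; case/h2/addpP: (hy) => a [z [ha /imgpP[t ht ez] e]].
    rewrite -ez in e.
    have htI : t \in I.
      apply/andP; split; last by apply: addpr.
      change (phi t \in L); have -> : phi t = y - a by rewrite e addrC addKr.
      by apply: smB => //; apply: h1.
    by rewrite e; apply: smD => //; rewrite phiE; apply: hJB => //; apply: hIJ.
  move=> _ /imgpP[t ht <-].
  by have /andP[] := hTI _ ht.
by move=> _ /imgpP[t _ <-]; rewrite phiE; apply: smZ.
Qed.

Lemma J4 A N B x : is_submod A -> is_submod N -> is_submod B ->
  {subset A <= N} -> {subset N <= B} ->
  (forall (j : R) y, j \in Jp -> y \in B -> j *: y \in A) ->
  x \in B -> x \notin N ->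
  (forall L, is_submod L -> {subset N <= L} -> {subset L <= B} -> x \notin L ->
      {subset L <= N}) ->
  cosimp B N.
Proof.
move=> hA hN hB hAN hNB hJB hx hxN hmax L hL h1 h2.
case: (pselect {subset L <= N}) => [h|hLN]; first by left.
have hNL : {subset N <= L} by move=> z hz; apply: h1; apply/andP; split=> //; apply: hNB.
have hxL : x \in L.
  by apply: contrapT => /negP hxL; apply: hLN; apply: hmax.
right=> b hb.
have : b \in ssoB N B.
  apply: J3 => // j y hj hy; apply: hAN; exact: hJB.
apply: gen_min => // y /asboolP[hy|[T [[hT hsT] hTB hyT]]]; first exact: hNL.
have hL' := predI_submod hL (addp_submod hN hT).
have s1 : {subset N <= predI L (addp N T)}.
  by move=> z hz; apply/andP; split; [apply: hNL | apply: addpl].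
have s2 : {subset predI L (addp N T) <= addp N T} by move=> z /andP[].
case: (hsT _ hL' s1 s2) => [h|h]; last by case/andP: (h _ hyT).
case: (pselect {subset T <= N}) => [hTN|/notsubset[t ht htN]].
  by apply: hNL; apply: hTN.
have hNT := addp_submod hN hT.
have hxNT : x \in addp N T.
  apply: contrapT => /negP hx'.
  have := hmax _ hNT (fun z hz => addpl hT hz) (addp_min hB hNB hTB) hx'.
  by move/(_ t (addpr hN ht)); move/negP: htN.
exfalso; move/negP: hxN; apply; apply: h; apply/andP; split=> //.
Qed.

Lemma FinLen Ns : forall U, is_submod U ->
  allL (fun N => is_submod N /\ cosimp U N) Ns -> noeth (capl U Ns) U.
Proof.
elim: Ns => [|N Ns IH] U hU hNs.
  by apply: noeth_two => L hL h1 h2; left => y /h2; rewrite capl_nil.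
case: hNs => [[hN hcN] hNs].
have hUN := predI_submod hU hN.
have hNs' : allL (fun N' => is_submod N' /\ cosimp (predI U N) N') Ns.
  by apply: allL_impl hNs => N' [h1 h2]; split=> //; apply: cosimp_cap.
have n1 := IH _ hUN hNs'.
have n2 : noeth (predI U N) U.
  apply: noeth_two => L hL h1 h2.
  have := hcN L hL h1 h2; case=> h; [left|right] => //.
  by move=> y hy; apply/andP; split; [apply: h2|apply: h].
have n3 := noeth_ext hUN hU (capl_sub (U := predI U N) (Ns := Ns))
   (fun y => (fun h => proj1 (andP h))) n1 n2.
by apply: noeth_sub n3 => // y; rewrite capl_cons.
Qed.

Definition goodS A B (N : pred M) :=
  [/\ is_submod N, {subset A <= N} & cosimp B N].

Definition nextS A B (ls : seq (pred M)) : seq (pred M) :=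
  match pselect (exists N, goodS A B N /\ exists x, x \in capl B ls /\ x \notin N) with
  | left h => sval (cid h) :: ls
  | right _ => ls
  end.

Lemma SSA A B : is_submod A -> is_submod B -> {subset A <= B} ->
  (forall (j : R) y, j \in Jp -> y \in B -> j *: y \in A) ->
  artin A B -> noeth A B.
Proof.
move=> hA hB hAB hJB hart.
pose S n := iter n (nextS A B) [::].
have hS n : allL (goodS A B) (S n).
  elim: n => //= n IH; rewrite /nextS; case: pselect => // h.
  by case: (cid h) => N /= [hN _]; split.
have hSsub n : allL (@is_submod R M) (S n) by apply: allL_impl (hS n) => N [].
have hCs n := capl_submod hB (hSsub n).
have hAC n : {subset A <= capl B (S n)}.
  move=> y hy; apply/caplP; split; first exact: hAB.
  by apply: allL_impl (hS n) => N [_ h _]; apply: h.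
have hCB n : {subset capl B (S n) <= B} by apply: capl_sub.
have hdec n : {subset capl B (S n.+1) <= capl B (S n)}.
  move=> y; rewrite /S /= /nextS; case: pselect => // h.
  by move/caplP => [hy [_ a]]; apply/caplP.
have [n0 hn0] := hart _ hCs hAC hCB hdec.
have hCA : {subset capl B (S n0) <= A}.
  move=> x hx; apply: contrapT => /negP hxA.
  have [N [hN hAN hNB hxN hmax]] := ZLx hA hAB hxA.
  have hc : cosimp B N.
    by apply: (J4 (A := A)) hmax => //; apply: hCB hx.
  have hex : exists N, goodS A B N /\ exists x, x \in capl B (S n0) /\ x \notin N.
    by exists N; split; [split | exists x].
  have := hn0 n0.+1 (leqnSn _).
  rewrite /S /= /nextS; case: pselect => [h|hn]; last by exfalso; apply: hn.
  case: (cid h) => N' /= [_ [x' [hx' hx'N]]] hsub.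
  by have /caplP[_ [hh _]] := hsub _ hx'; move/negP: hx'N.
have hcos : allL (fun N => is_submod N /\ cosimp B N) (S n0).
  by apply: allL_impl (hS n0) => N [h _ h'].
by apply: noeth_sub (FinLen hB hcos).
Qed.

End JJ.

Arguments zp_submod {R M}.
Arguments topp_submod {R M}.
Lemma zp_sub (R : pzRingType) (X : lmodType R) (P : pred X) :
  is_submod P -> {subset zp <= P}.
Proof. by move=> hP y /eqP ->; apply: sm0. Qed.

Section ArtFG.
Variables (R : pzRingType) (X : lmodType R).
Hypothesis HR : left_artinian R.
Implicit Types (A B C N U L K T P : pred X) (x y : X).

Definition cyc x : pred X := fun y => `[< exists r : R, y = r *: x >].
Lemma cyc_submod x : is_submod (cyc x).
Proof.
split.
- by apply/asboolP; exists 0; rewrite scale0r.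
- move=> y z /asboolP[r ->] /asboolP[s ->]; apply/asboolP; exists (r + s).
  by rewrite scalerDl.
- by move=> a y /asboolP[r ->]; apply/asboolP; exists (a * r); rewrite scalerA.
Qed.
Lemma cyc_in x : x \in cyc x.
Proof. by apply/asboolP; exists 1; rewrite scale1r. Qed.

Lemma artin_cyc P x : is_submod P -> artin P (addp P (cyc x)).
Proof.
move=> hP L hL hA hB hdec.
pose I n : pred R := fun r => (r *: x) \in L n.
have hI n : left_ideal (I n).
  split; rewrite /I.
  - by rewrite unfold_in /= scale0r sm0.
  - by move=> r s; rewrite !unfold_in /= scalerDl; apply: smD.
  - by move=> r s; rewrite !unfold_in /= -scalerA; apply: smZ.
have hIdec n : {subset I n.+1 <= I n}.
  by move=> r; rewrite !unfold_in /=; apply: hdec.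
have [n hn] := HR hI hIdec.
exists n => m hm y hy.
case/addpP: (hB n y hy) => p [z [hp /asboolP[r ->] e]].
have hrn : r \in I n.
  rewrite unfold_in /=; have -> : r *: x = y - p by rewrite e addrC addKr.
  by apply: smB => //; apply: hA.
have : r \in I m by rewrite (hn m hm).
rewrite unfold_in /= => hrm.
by rewrite e; apply: smD => //; apply: hA.
Qed.

Lemma artin_span (s : seq X) : artin zp (spn s).
Proof.
elim: s => [|x s IH].
  move=> L hL hA hB hdec; exists 0%N => m _ y /hB hy.
  have : y \in zp.
    by apply: (gen_min zp_submod) hy.
  by move/eqP ->; apply: sm0.
have hS : is_submod (spn s) := gen_submod _.
have hAd := addp_submod hS (cyc_submod x).
have h1 := artin_ext hS hAd (zp_sub hS)
  (fun y h => addpl (cyc_submod x) h) IH (artin_cyc (x := x) hS).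
apply: (artin_sub _ _ h1) => // y; apply: gen_min => // z; rewrite inE => /orP[/eqP ->|hz].
  by apply: addpr => //; apply: cyc_in.
by apply: addpl; [apply: cyc_submod | apply: gen_sub].
Qed.

Lemma artin_fg : fingen X -> artin (@zp _ X) topp.
Proof.
case/fingenP=> s hs L hL hA hB hdec.
apply: (artin_span (s := s)) => // n y _; exact: hs.
Qed.

End ArtFG.

Section NoethFG.
Variables (R : pzRingType) (X : lmodType R).
Implicit Types (A B C N U L K T P : pred X) (x y : X).

Definition nextF U (s : seq X) : seq X :=
  match pselect (exists u, (u \in U) && (u \notin spn s)) with
  | left h => xchoose h :: s
  | right _ => s
  end.

Lemma noeth_fg U : noeth (@zp _ X) topp -> is_submod U ->
  exists s : seq X, (forall x, x \in s -> x \in U) /\ {subset U <= spn s}.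
Proof.
move=> hN hU; apply: contrapT => hne.
pose S n := iter n (nextF U) [::].
have hSU n : forall x, x \in S n -> x \in U.
  elim: n => //= k IH x; rewrite /nextF; case: pselect => [h|_]; last exact: IH.
  rewrite inE => /orP[/eqP ->|]; last exact: IH.
  by have /andP[] := xchooseP h.
have hinc n : {subset spn (S n) <= spn (S n.+1)}.
  apply: genS => x hx /=; rewrite /nextF; case: pselect => // h.
  by rewrite inE hx orbT.
have [n hn] := hN (fun n => spn (S n)) (fun n => gen_submod _)
  (fun n => zp_sub (gen_submod _)) (fun n x _ => isT) hinc.
have : ~ {subset U <= spn (S n)}.
  by move=> h; apply: hne; exists (S n); split=> //; apply: hSU.
move/notsubset => [u hu hun].
have ex : exists u, (u \in U) && (u \notin spn (S n)) by exists u; rewrite hu.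
have := hn n.+1 (leqnSn _); rewrite /= /nextF.
case: pselect => [h|hn']; last by exfalso; apply: hn'.
move=> hsub.
have /andP[_ /negP] := xchooseP h; apply; apply: hsub.
by apply: gen_sub; rewrite inE eqxx.
Qed.

Lemma fg_sub U : noeth (@zp _ X) topp -> is_submod U -> fingen (subm U).
Proof.
move=> hN hU; have [s [hs hUs]] := noeth_fg hN hU.
apply: (fingen_subm (s := s)).
  by move=> x /hs; rewrite gen_id.
by move=> x; rewrite gen_id //; apply: hUs.
Qed.

End NoethFG.

Arguments zp_submod {R M}.
Arguments topp_submod {R M}.

Section Ring.
Variable R : pzRingType.

Definition maxl (L : pred R^o) := [/\ is_submod L, (1 : R^o) \notin L &
  forall L', is_submod L' -> {subset L <= L'} -> (1 : R^o) \notin L' -> {subset L' <= L}].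
Definition Jr : pred R^o := fun r => `[< forall L, maxl L -> r \in L >].

Lemma JrP (r : R^o) : reflect (forall L, maxl L -> r \in L) (r \in Jr).
Proof. exact: asboolP. Qed.

Lemma Jr_submod : is_submod Jr.
Proof.
split.
- by apply/JrP => L [hL _ _]; apply: sm0.
- by move=> x y /JrP hx /JrP hy; apply/JrP => L hL; case: (hL) => h _ _; apply: smD => //; [apply: hx|apply: hy].
- by move=> a x /JrP hx; apply/JrP => L hL; case: (hL) => h _ _; apply: smZ => //; apply: hx.
Qed.

Lemma J1mod (M : lmodType R) (N : pred M) (x : M) (j : R) :
  maximal_sub N -> j \in Jr -> j *: x \in N.
Proof.
case=> hN _ hK /JrP hj.
case: (boolP (x \in N)) => hx; first exact: smZ.
pose phi : {linear R^o -> M} := mklin (rmul_lin x).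
pose L : pred R^o := prep phi N.
apply: (hj L); split.
- exact: prep_submod.
- by rewrite /L prepE /= scale1r.
- move=> L' hL' hLL' h1L' r hr.
  apply: contrapT => /negP hrL.
  have hrx : (r : R) *: x \notin N by [].
  have hKs := addp_submod hN (cyc_submod ((r : R) *: x)).
  case: (hK _ hKs (fun y hy => addpl (cyc_submod _) hy)) => [h|h].
    by move/negP: hrx; apply; apply: h; apply: addpr => //; apply: cyc_in.
  case/addpP: (h x) => n [z [hn /asboolP[s hs] e]].
  have h1 : (1 - s * r : R^o) \in L.
    rewrite /L prepE /= scalerBl scale1r -scalerA -hs.
    by have -> : x - z = n by rewrite e addrK.
  have h2 : (s * r : R^o) \in L' by exact: (smZ s hL' hr).
  move/negP: h1L'; apply.
  have -> : (1 : R^o) = (1 - s * r) + s * r by rewrite subrK.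
  by apply: smD => //; apply: hLL'.
Qed.

Lemma maxl_maximal (L : pred R^o) : maxl L -> maximal_sub L.
Proof.
case=> hL h1 hm; split=> //; first by exists 1.
move=> K hK hLK; case: (boolP ((1 : R^o) \in K)) => h.
  right=> y; have -> : y = y *: (1 : R^o) by rewrite /GRing.scale /= mulr1.
  exact: smZ.
by left; apply: hm.
Qed.

Lemma Jright (j r : R) : j \in Jr -> (j * r : R^o) \in Jr.
Proof.
move=> hj; apply/JrP => L hL.
exact: (J1mod (M := R^o) r (maxl_maximal hL) hj).
Qed.

Lemma sm_li (I : pred R^o) : is_submod I -> left_ideal (I : pred R).
Proof. by case=> h0 hD hZ; split. Qed.

Definition nextJ (ls : seq (pred R^o)) : seq (pred R^o) :=
  match pselect (exists L, maxl L /\ exists r, r \in capl topp ls /\ r \notin L) with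
  | left h => sval (cid h) :: ls
  | right _ => ls
  end.

Lemma Jfin : left_artinian R -> exists Ls : seq (pred R^o),
  allL maxl Ls /\ forall r, r \in capl topp Ls -> r \in Jr.
Proof.
move=> HR.
pose S n := iter n nextJ [::].
have hS n : allL maxl (S n).
  elim: n => //= n IH; rewrite /nextJ; case: pselect => // h.
  by case: (cid h) => L /= [hL _]; split.
have hI n : left_ideal (capl topp (S n) : pred R).
  apply: sm_li; apply: capl_submod; first exact: topp_submod.
  by apply: allL_impl (hS n) => L [].
have hdec n : {subset capl topp (S n.+1) <= capl topp (S n)}.
  move=> y; rewrite /S /= /nextJ; case: pselect => // h.
  by move/caplP => [hy [_ a]]; apply/caplP.
have [n hn] := HR (fun n => capl topp (S n) : pred R) hI hdec.
exists (S n); split=> // r hr; apply/JrP => L hL.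
apply: contrapT => /negP hrL.
have := hn n.+1 (leqnSn _).
rewrite /S /= /nextJ; case: pselect => [h|hn']; last first.
  by exfalso; apply: hn'; exists L; split=> //; exists r.
case: (cid h) => L' /= [_ [r' [hr' hr'L]]] e.
have : r' \in capl topp (S n) by [].
rewrite -e => /caplP[_ [hh _]].
by move/negP: hr'L.
Qed.

Lemma J1sso : left_artinian R -> (1 : R^o) \in ssoB Jr topp.
Proof.
move=> HR; have [Ls [hLs hJ]] := Jfin HR.
have hc : allL (fun N => is_submod N /\ cosimp topp N) Ls.
  apply: allL_impl hLs => L [hL h1 hm]; split=> // L' hL' h2 _.
  case: (boolP ((1 : R^o) \in L')) => h.
    right=> y _; have -> : y = y *: (1 : R^o) by rewrite /GRing.scale /= mulr1.
    exact: smZ.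
  left; apply: hm => // y hy; apply: h2; apply/andP.
have := ULem topp_submod hc (isT : (1 : R^o) \in topp).
apply: ssoB_ext => // r; apply/idP/idP; first exact: hJ.
move=> hr; apply/caplP; split=> //.
by move/JrP: hr => hr; elim: Ls hLs {hJ hc} => //= L Ls IH [hL /IH]; split=> //; apply: hr.
Qed.

End Ring.

Notation radm M := (@Defs.rad _ M).
Notation socm M := (@Defs.soc _ M).
Section RadM.
Variables (R : pzRingType) (HR : left_artinian R).

Definition JX (M : lmodType R) : pred M :=
  gen (fun y => `[< exists (j : R) z, j \in (@Jr R) /\ y = j *: z >]).
Arguments JX : clear implicits.

Lemma radP (M : lmodType R) (x : M) :
  reflect (forall N, maximal_sub N -> x \in N) (x \in radm M).
Proof. exact: asboolP. Qed.

Lemma rad_submod (M : lmodType R) : is_submod (radm M).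
Proof.
split.
- by apply/radP => N [hN _ _]; apply: sm0.
- move=> x y /radP hx /radP hy; apply/radP => N hm.
  by case: (hm) => hN _ _; apply: smD => //; [apply: hx|apply: hy].
- move=> a x /radP hx; apply/radP => N hm.
  by case: (hm) => hN _ _; apply: smZ => //; apply: hx.
Qed.

Lemma Jrad (M : lmodType R) x : x \in JX M -> x \in radm M.
Proof.
apply: gen_min; first exact: rad_submod.
move=> y /asboolP[j [z [hj ->]]]; apply/radP => N hN.
exact: J1mod.
Qed.

Lemma radJ (M : lmodType R) x : x \in radm M -> x \in JX M.
Proof.
move=> hx; apply: contrapT => /negP hxJ.
have hJs : is_submod (JX M) := gen_submod _.
have [N [hN hAN hNB hxN hmax]] := ZLx hJs (fun y _ => isT : y \in topp) hxJ.
have hc : cosimp topp N.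
  apply: (J4 (@Jr_submod R) (J1sso HR) hJs hN topp_submod hAN hNB _ (isT : x \in topp) hxN hmax).
  by move=> j y hj _; apply: gen_sub; apply/asboolP; exists j, y.
have hm : maximal_sub N.
  split=> //; first by exists x.
  move=> K hK hNK.
  case: (hc K hK (fun y hy => hNK y (proj2 (andP hy))) (fun y _ => isT)) => h; [left|right] => //.
  by move=> y; apply: h.
by move/radP: hx => /(_ N hm); move/negP: hxN.
Qed.

Lemma JX_img (M N : lmodType R) (f : {linear M -> N}) :
  (forall y, exists x, f x = y) -> {subset JX N <= imgp f (JX M)}.
Proof.
move=> hf; apply: gen_min; first by apply: imgp_submod; apply: gen_submod.
move=> y /asboolP[j [z [hj ->]]]; have [x <-] := hf z.
apply/imgpP; exists (j *: x); last by rewrite linearZ.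
by apply: gen_sub; apply/asboolP; exists j, x.
Qed.

Lemma radE (M N : lmodType R) (f : {linear M -> N}) :
  (forall y, exists x, f x = y) -> {subset radm N <= imgp f (radm M)}.
Proof.
move=> hf y /radJ /(JX_img hf) /imgpP[x hx <-]; apply: imgp_in; exact: Jrad.
Qed.

Lemma rad_nat (M N : lmodType R) (f : {linear M -> N}) x :
  x \in radm M -> f x \in radm N.
Proof.
move=> /radJ hx; apply: Jrad.
have : x \in prep f (JX N).
  apply: (gen_min (prep_submod f (gen_submod _))) hx.
  move=> y /asboolP[j [z [hj ->]]]; rewrite prepE linearZ.
  by apply: gen_sub; apply/asboolP; exists j, (f z).
by [].
Qed.

Lemma radS (W : lmodType R) : (forall x, x \in radm W -> x = 0) -> forall w, w \in socm W.
Proof.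
move=> h0 w.
have : w \in ssoB zp topp.
  apply: (J3 (@Jr_submod R) (J1sso HR) zp_submod topp_submod) => //.
  move=> j y hj _; apply/eqP; apply: h0; apply: Jrad.
  by apply: gen_sub; apply/asboolP; exists j, y.
apply: gen_min; first exact: gen_submod.
move=> y /asboolP[/eqP->|[T [[hT hs] _ hyT]]]; first exact: gen0.
case: (pselect {subset T <= zp}) => [hTz|/notsubset[t ht htz]].
  by move/hTz/eqP: hyT => ->; apply: gen0.
apply: gen_sub; apply/asboolP; exists T => //; split=> //.
  by exists t => //; move: htz.
move=> K hK hKT.
case: (hs K hK (zp_sub hK) (fun z hz => addpr zp_submod (hKT z hz))) => h; [left|right] => //.
by move=> z /h /eqP.
Qed.

End RadM.

Section Nil.
Variables (R : pzRingType) (HR : left_artinian R).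

Lemma Jinv (a : R) : a \in (@Jr R) -> exists u : R, u * (1 - a) = 1.
Proof.
move=> ha.
have hL0 := cyc_submod (1 - a : R^o).
case: (boolP ((1 : R^o) \in cyc (1 - a : R^o))) => [/asboolP[u hu]|h1].
  by exists u; rewrite [RHS]hu.
have [N [hN hAN hNB hxN hmax]] := ZLx hL0 (fun y _ => isT : y \in topp) h1.
have hm : maxl N by split=> // L' hL' hNL h1L'; apply: hmax.
have haN : (a : R^o) \in N by move/JrP: ha => h; exact: h N hm.
have h1a : (1 - a : R^o) \in N by apply: hAN; apply: cyc_in.
have h1N : (1 : R^o) \in N.
  have -> : (1 : R^o) = (1 - a) + a by rewrite subrK.
  exact: smD.
by rewrite h1N in hxN.
Qed.

Definition nextM (F : pred R^o -> Prop) (L : pred R^o) : pred R^o :=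
  match pselect (exists L', F L' /\ {subset L' <= L} /\ ~ {subset L <= L'}) with
  | left h => sval (cid h)
  | right _ => L
  end.

Lemma dcc_min (F : pred R^o -> Prop) : (forall L, F L -> is_submod L) ->
  forall L0, F L0 -> exists L, F L /\ forall L', F L' -> {subset L' <= L} -> {subset L <= L'}.
Proof.
move=> hF L0 hL0.
pose S n := iter n (nextM F) L0.
have hS n : F (S n).
  elim: n => //= n IH; rewrite /nextM; case: pselect => // h.
  by case: (cid h) => L /= [].
have hI n : left_ideal (S n : pred R) by apply: sm_li; apply: hF.
have hdec n : {subset S n.+1 <= S n}.
  rewrite /S /= /nextM; case: pselect => [h|_]; last by move=> y.
  by case: (cid h) => L /= [_ []].
have [n hn] := @HR (fun n => S n : pred R) hI hdec.
exists (S n); split=> // L' hL' hsub; apply: contrapT => hns.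
have := hn n.+1 (leqnSn _).
rewrite /S /= /nextM; case: pselect => [h|hn']; last first.
  by exfalso; apply: hn'; exists L'.
case: (cid h) => L'' /= [_ [_ hns']] e.
by apply: hns' => y; rewrite -e.
Qed.

Fixpoint jp (n : nat) : pred R^o :=
  if n is n'.+1 then
    gen (fun y : R^o => `[< exists (b a : R), b \in (@Jr R) /\ (a : R^o) \in jp n' /\ y = b * a >])
  else topp.

Definition prodI (P Q : pred R^o) : pred R^o :=
  gen (fun y : R^o => `[< exists (c d : R), (c : R^o) \in P /\ (d : R^o) \in Q /\ y = c * d >]).

Lemma jp_submod n : is_submod (jp n).
Proof. by case: n => [|n]; [exact: topp_submod | exact: gen_submod]. Qed.

Lemma jp_dec n : {subset jp n.+1 <= jp n}.
Proof.
case: n => [//|n]; apply: gen_min; first exact: jp_submod.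
move=> y /asboolP[b [a [hb [ha ->]]]].
exact: (smZ b (jp_submod n.+1) ha).
Qed.

Lemma jp1 : {subset jp 1 <= @Jr R}.
Proof.
apply: gen_min; first exact: Jr_submod.
by move=> y /asboolP[b [a [hb [_ ->]]]]; apply: Jright.
Qed.

Lemma jp_mul m n : {subset jp (m + n) <= prodI (jp m) (jp n)}.
Proof.
elim: m n => [|m IH] n y.
  move=> hy; apply: gen_sub; apply/asboolP; exists 1, y.
  by split=> //; split=> //; rewrite mul1r.
rewrite addSn; apply: gen_min; first exact: gen_submod.
move=> z /asboolP[b [a [hb [ha ->]]]].
have hT : is_submod (prodI (jp m.+1) (jp n)) := gen_submod _.
pose S' : pred R^o := fun s => `[< forall b : R, b \in (@Jr R) ->
     ((b * s : R) : R^o) \in prodI (jp m.+1) (jp n) >].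
have hS' : is_submod S'.
  split.
  - by apply/asboolP => b' _; rewrite mulr0; apply: sm0.
  - move=> s1 s2 /asboolP h1 /asboolP h2; apply/asboolP => b' hb'.
    by rewrite mulrDr; apply: smD => //; [apply: h1|apply: h2].
  - move=> r s /asboolP h1; apply/asboolP => b' hb'.
    have -> : (b' * (r *: s : R^o) : R) = (b' * r) * s by rewrite mulrA.
    by apply: h1; apply: Jright.
have : a \in S'.
  apply: (gen_min hS') (IH n a ha).
  move=> w /asboolP[c [d [hc [hd ->]]]]; apply/asboolP => b' hb'.
  rewrite mulrA; apply: gen_sub; apply/asboolP; exists (b' * c), d.
  split; last by split.
  by apply: gen_sub; apply/asboolP; exists b', c.
by move/asboolP; apply.
Qed.

Lemma Jnil : exists n, forall r : R^o, r \in jp n -> r = 0.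
Proof.
have hI n : left_ideal (jp n : pred R) by apply: sm_li; apply: jp_submod.
have [N0 hn0] := @HR (fun n => jp n : pred R) hI jp_dec.
have hn m : (N0 <= m)%N -> forall x : R^o, (x \in jp m) = (x \in jp N0).
  by move=> hm x; exact: (hn0 m hm x).
pose K := jp N0.+1.
have hKs : is_submod K := jp_submod _.
have eK : forall x, (x \in K) = (x \in jp N0) by move=> x; apply: hn.
have hKK : {subset K <= prodI K K}.
  move=> x hx.
  have : x \in jp (N0.+1 + N0.+1).
    by rewrite (hn (N0.+1 + N0.+1)%N (leq_trans (leqnSn N0) (leq_addr _ _))) -eK.
  by move/jp_mul.
have hKJ : {subset K <= @Jr R}.
  move=> x hx; apply: jp1.
  by apply: (decr_mono jp_dec (n := 1) (m := N0.+1)).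
exists N0.+1 => k0 hk0; apply: contrapT => /eqP hk0n.
pose F (L : pred R^o) := is_submod L /\ exists (k l : R),
   (k : R^o) \in K /\ (l : R^o) \in L /\ k * l != 0.
have hFs L : F L -> is_submod L by case.
have hFT : F topp by split; [exact: topp_submod | exists k0, 1; rewrite mulr1].
have [L0 [[hL0 [k [y [hk [hy hky]]]]] hmin]] := dcc_min hFs hFT.
pose Ky : pred R^o := fun z => `[< exists k' : R, (k' : R^o) \in K /\ z = k' * y >].
have hKy : is_submod Ky.
  split.
  - by apply/asboolP; exists 0; rewrite mul0r; split=> //; apply: sm0.
  - move=> z1 z2 /asboolP[k1 [h1 ->]] /asboolP[k2 [h2 ->]]; apply/asboolP.
    by exists (k1 + k2); rewrite mulrDl; split=> //; apply: smD.
  - move=> r z /asboolP[k1 [h1 ->]]; apply/asboolP; exists (r * k1).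
    split; first exact: (smZ r hKs h1).
    by rewrite /GRing.scale /= mulrA.
have hKyL : {subset Ky <= L0}.
  by move=> z /asboolP[k1 [h1 ->]]; exact: (smZ k1 hL0 hy).
have hFKy : F Ky.
  split=> //; apply: contrapT => hne.
  pose Ann : pred R^o := fun z => (z : R) * y == 0.
  have AnnE z : (z \in Ann) = ((z : R) * y == 0) by [].
  have hAnn : is_submod Ann.
    split.
    - by rewrite AnnE mul0r.
    - by move=> a b; rewrite !AnnE mulrDl => /eqP-> /eqP->; rewrite addr0.
    - by move=> a b; rewrite !AnnE /GRing.scale /= -mulrA => /eqP->; rewrite mulr0.
  have : k \in Ann.
    apply: (gen_min hAnn) (hKK k hk).
    move=> w /asboolP[c [d [hc [hd ->]]]]; rewrite AnnE -mulrA.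
    apply/eqP; apply: contrapT => /eqP hcd; apply: hne.
    exists c, (d * y); split=> //; split=> //.
    by apply/asboolP; exists d.
  by rewrite AnnE; move/negP: hky.
have /asboolP[a [ha ey]] := hmin Ky hFKy hKyL y hy.
have [u hu] := Jinv (hKJ a ha).
have y0 : (y : R) = 0.
  by rewrite -[y]mul1r -hu -mulrA mulrBl mul1r -ey subrr mulr0.
by move/negP: hky; apply; rewrite y0 mulr0.
Qed.

End Nil.

Section NoethX.
Variables (R : pzRingType) (HR : left_artinian R) (X : lmodType R).

Definition Bl (i : nat) : pred X :=
  gen (fun y => `[< exists (r : R) z, (r : R^o) \in jp i /\ y = r *: z >]).

Lemma Bl_submod i : is_submod (Bl i). Proof. exact: gen_submod. Qed.

Lemma Bl0 : {subset topp <= Bl 0}.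
Proof. by move=> y _; apply: gen_sub; apply/asboolP; exists 1, y; rewrite scale1r. Qed.

Lemma Bl_dec i : {subset Bl i.+1 <= Bl i}.
Proof.
apply: gen_min; first exact: Bl_submod.
move=> y /asboolP[r [z [hr ->]]]; apply: gen_sub; apply/asboolP; exists r, z.
by split=> //; apply: jp_dec.
Qed.

Lemma Bl_J i (j : R) y : j \in (@Jr R) -> y \in Bl i -> j *: y \in Bl i.+1.
Proof.
move=> hj hy.
pose Q : pred X := fun y => `[< forall j : R, j \in (@Jr R) -> j *: y \in Bl i.+1 >].
have hQ : is_submod Q.
  split.
  - by apply/asboolP => j' _; rewrite scaler0; apply: sm0; apply: Bl_submod.
  - move=> a b /asboolP h1 /asboolP h2; apply/asboolP => j' hj'.
    by rewrite scalerDr; apply: smD; [apply: Bl_submod|apply: h1|apply: h2].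
  - move=> a b /asboolP h1; apply/asboolP => j' hj'.
    by rewrite scalerA; apply: h1; apply: Jright.
have : y \in Q.
  apply: (gen_min hQ) hy => w /asboolP[r [z [hr ->]]]; apply/asboolP => j' hj'.
  rewrite scalerA; apply: gen_sub; apply/asboolP; exists (j' * r), z; split=> //.
  by apply: gen_sub; apply/asboolP; exists j', r.
by move/asboolP; apply.
Qed.

Lemma noeth_Xfg : fingen X -> noeth (@zp _ X) topp.
Proof.
move=> hfg.
have hart := artin_fg HR hfg.
have hlay i : noeth (Bl i.+1) (Bl i).
  apply: (SSA (@Jr_submod R) (J1sso HR) (Bl_submod _) (Bl_submod _) (@Bl_dec i)).
    by move=> j y hj hy; apply: Bl_J.
  apply: (artin_sub _ _ hart); last by move=> y.
  by move=> y /eqP->; apply: sm0; apply: Bl_submod.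
have hind i : noeth (Bl i) topp.
  elim: i => [|i IH].
    by apply: noeth_two => L hL h1 h2; left => y _; apply: Bl0.
  exact: (noeth_ext (Bl_submod i) topp_submod (@Bl_dec i) (fun y _ => isT) (hlay i) IH).
have [n hn] := Jnil HR.
apply: (noeth_sub _ _ (hind n)) => // y hy.
apply: (gen_min zp_submod) hy => w /asboolP[r [z [hr ->]]].
by rewrite (hn r hr) scale0r zpE.
Qed.

Lemma fg_subm (U : pred X) : fingen X -> is_submod U -> fingen (subm U).
Proof. by move=> hfg hU; apply: fg_sub => //; apply: noeth_Xfg. Qed.

End NoethX.

Section Restr.
Variables (R : pzRingType) (A B : lmodType R) (P : pred A) (Q : pred B)
  (f : {linear A -> B}) (h : forall x, x \in gen P -> f x \in gen Q).

Definition restrf (x : subm P) : subm Q := exist _ (f (sval x)) (h (svalP x)).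
Lemma restrf_lin : linear restrf.
Proof. by move=> a x y; apply: sm_inj; rewrite /= linearP. Qed.
Definition restrL : {linear subm P -> subm Q} := mklin restrf_lin.
Lemma restrLE x : sval (restrL x) = f (sval x). Proof. by []. Qed.
End Restr.

Lemma lin_inj0 (R : pzRingType) (A B : lmodType R) (f : {linear A -> B}) x :
  injective f -> f x = 0 -> x = 0.
Proof. by move=> hi e; apply: hi; rewrite e linear0. Qed.

Lemma soc_nat (R : pzRingType) (A B : lmodType R) (f : {linear A -> B}) x :
  x \in @soc _ A -> f x \in @soc _ B.
Proof.
move=> hx.
have : x \in prep f (@soc _ B).
  apply: (gen_min (prep_submod f (gen_submod _))) hx.
  move=> y /asboolP[S [hS [s hs hs0] hK] hy]; change (f y \in @soc _ B).
  case: (pselect (forall t, t \in S -> f t = 0)) => [h0|hn].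
    by rewrite h0 //; apply: gen0.
  have [t ht hft] : exists2 t, t \in S & f t != 0.
    apply: contrapT => hne; apply: hn => t ht; apply: contrapT => /eqP hne'.
    by apply: hne; exists t.
  apply: gen_sub; apply/asboolP; exists (imgp f S); last exact: imgp_in.
  split; first exact: imgp_submod.
    by exists (f t) => //; apply: imgp_in.
  move=> K hKs hKS.
  have hK' := predI_submod hS (prep_submod f hKs).
  case: (hK _ hK' (fun z hz => proj1 (andP hz))) => [h|h]; [left|right].
    move=> k hk; case/imgpP: (hKS k hk) => u hu e.
    have : u \in predI S (prep f K).
      by apply/andP; split=> //; change (f u \in K); rewrite e.
    by move/h => u0; rewrite -e u0 linear0.
  by move=> _ /imgpP[u hu <-]; have /andP[_] := h u hu.
by [].
Qed.

Section Main.
Variables (R : pzRingType) (HR : left_artinian R) (alpha beta : preradical R).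
Hypotheses (Ha : is_radical alpha) (Hb : is_radical beta) (Hepi : preserves_epi alpha).
Local Notation Fa := (F_obj (pr_obj alpha)).
Local Notation Gb := (G_obj (q_obj beta)).
Implicit Types (X Y : lmodType R).

Fixpoint emb (k : nat) (X : lmodType R) : iter k Fa X -> X :=
  match k return iter k Fa X -> X with
  | 0 => fun x => x
  | k'.+1 => fun z => @emb k' X (sval (sval z))
  end.
Arguments emb : clear implicits.

Lemma emb_lin k X : linear (emb k X).
Proof.
elim: k => [|k IH] a u v //=.
exact: (IH a (sval (sval u)) (sval (sval v))).
Qed.
Definition embL k X : {linear iter k Fa X -> X} := mklin (@emb_lin k X).
Lemma embLE k X z : embL k.+1 X z = embL k X (sval (sval z)). Proof. by []. Qed.

Lemma emb_inj k X : injective (embL k X).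
Proof.
elim: k => [|k IH] u v //= e.
by apply: sm_inj; apply: sm_inj; apply: IH.
Qed.

Lemma prad_gen (a : preradical R) (X : lmodType R) x : fingen X ->
  (x \in gen (prad _ a X)) = (x \in prad _ a X).
Proof. by move=> hX; rewrite gen_id //; apply: prad_submod. Qed.

Lemma pr_fg (a : preradical R) (X : lmodType R) : fingen X -> fingen (pr_obj a X).
Proof. by move=> hX; apply: fg_subm => //; apply: prad_submod. Qed.

Lemma iter_fg k X : fingen X -> fingen (iter k Fa X).
Proof.
move=> hX; elim: k => //= k IH.
apply: fg_subm => //; first exact: pr_fg.
exact: rad_submod.
Qed.

Definition Ak k X : pred X := imgp (embL k X) (prad _ alpha (iter k Fa X)).
Arguments Ak : clear implicits.

Lemma zero_upE k X : fingen X ->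
  zero_mod (pr_obj alpha (iter k Fa X)) <-> (forall x, x \in Ak k X -> x = 0).
Proof.
move=> hX; have hXX := iter_fg k hX.
split=> h.
- have h' := (zero_subm _).1 h.
  move=> _ /imgpP[x' hx' <-]; rewrite (h' x') ?linear0 //.
  by rewrite prad_gen.
- apply/(zero_subm _).2 => x'; rewrite prad_gen // => hx'.
  apply: (lin_inj0 (@emb_inj k X)); apply: h; exact: imgp_in.
Qed.

Lemma Dmap (X Y XX YY : lmodType R) (eX : {linear XX -> X}) (eY : {linear YY -> Y})
  (f : {linear X -> Y}) : fingen XX -> injective eY ->
  (forall y', exists x', f (eX x') = eY y') ->
  exists (D : lmodType R) (g : {linear D -> YY}) (i : {linear D -> XX}),
    [/\ fingen D, (forall y', exists d, g d = y') & forall d, eY (g d) = f (eX (i d))].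
Proof.
move=> hXX hinj hs.
pose Dp : pred XX := fun x' => `[< exists y', eY y' = f (eX x') >].
have hDp : is_submod Dp.
  split.
  - by apply/asboolP; exists 0; rewrite !linear0.
  - move=> u v /asboolP[u' hu] /asboolP[v' hv]; apply/asboolP; exists (u' + v').
    by rewrite !linearD hu hv.
  - move=> a u /asboolP[u' hu]; apply/asboolP; exists (a *: u').
    by rewrite !linearZ hu.
pose gf (d : subm Dp) : YY :=
  match pselect (exists y', eY y' = f (eX (sval d))) with
  | left h => sval (cid h)
  | right _ => 0
  end.
have geq d : eY (gf d) = f (eX (sval d)).
  rewrite /gf; case: pselect => [h|hn]; first by case: (cid h).
  exfalso; apply: hn; have := svalP d; rewrite gen_id // => /asboolP.
  by [].
have glin : linear gf.
  move=> a u v; apply: hinj.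
  by rewrite geq !linearP !geq.
pose g : {linear subm Dp -> YY} := mklin glin.
exists (subm Dp), g, (incl Dp); split.
- exact: fg_subm.
- move=> y'; have [x' hx'] := hs y'.
  have hx'D : x' \in gen Dp by rewrite gen_id //; apply/asboolP; exists y'.
  exists (exist _ x' hx'D); apply: hinj.
  by rewrite (geq (exist _ x' hx'D)).
- by move=> d; rewrite geq.
Qed.

Lemma QA k X Y (f : {linear X -> Y}) : fingen X -> fingen Y ->
  (forall y', exists x', f (embL k X x') = embL k Y y') ->
  forall y, y \in Ak k Y -> y \in imgp f (Ak k X).
Proof.
move=> hX hY hs _ /imgpP[y' hy' <-].
have hXX := iter_fg k hX; have hYY := iter_fg k hY.
have [D [g [i [hD hg he]]]] := Dmap hXX (@emb_inj k Y) hs.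
have [d hd gd] := Hepi hD hYY hg hy'.
apply/imgpP; exists (embL k X (i d)); last by rewrite -he gd.
apply: imgp_in; exact: (prad_nat _ _ _ _ i hD hXX d hd).
Qed.

Lemma QC k : forall X Y (f : {linear X -> Y}), fingen X -> fingen Y ->
  (forall y, exists x, f x = y) ->
  forall y', exists x', f (embL k X x') = embL k Y y'.
Proof.
elim: k => [|k IH] X Y f hX hY hf y'.
  by have [x hx] := hf y'; exists x.
have hXX := iter_fg k hX; have hYY := iter_fg k hY.
have [D [g [i [hD hg he]]]] := Dmap hXX (@emb_inj k Y) (IH X Y f hX hY hf).
have hgP : forall x, x \in gen (prad _ alpha D) -> g x \in gen (prad _ alpha (iter k Fa Y)).
  by move=> x; rewrite !prad_gen // => hx; apply: (prad_nat _ _ _ _ g hD hYY x hx).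
have hiP : forall x, x \in gen (prad _ alpha D) -> i x \in gen (prad _ alpha (iter k Fa X)).
  by move=> x; rewrite !prad_gen // => hx; apply: (prad_nat _ _ _ _ i hD hXX x hx).
pose ga := restrL hgP.
pose ia := restrL hiP.
have hga : forall w, exists v, ga v = w.
  move=> w; have hw : sval w \in prad _ alpha (iter k Fa Y).
    by rewrite -prad_gen //; case: w.
  have [d hd gd] := Hepi hD hYY hg hw.
  have hd' : d \in gen (prad _ alpha D) by rewrite prad_gen.
  by exists (exist _ d hd'); apply: sm_inj; rewrite restrLE gd.
have hz : sval y' \in @Defs.rad _ (pr_obj alpha (iter k Fa Y)).
  by rewrite -(gen_id _ (rad_submod _)); case: y'.
have /imgpP[w hw e] := radE HR hga hz.
have hiw := rad_nat HR ia hw.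
have hiw' : ia w \in gen (@Defs.rad _ (pr_obj alpha (iter k Fa X))) by apply: gen_sub.
exists (exist _ (ia w) hiw').
rewrite !embLE /= -e !restrLE; exact: (esym (he _)).
Qed.

Variable HFT : forall M : lmodType R, in_F alpha M -> in_T beta M.

Lemma StepC n Z : fingen Z -> (forall z, z \in prad _ beta Z -> z = 0) ->
  zero_mod (pr_obj alpha (iter n.+1 Fa Z)) ->
  zero_mod (pr_obj alpha (iter n Fa (quotm (@soc _ Z)))).
Proof.
move=> hZ hbZ h.
have hV := iter_fg n.+1 hZ.
have hFV : in_F alpha (iter n.+1 Fa Z).
  split=> // x hx; apply: ((zero_subm _).1 h); exact: gen_sub.
have [_ hTV] := HFT hFV.
have V0 (v : iter n.+1 Fa Z) : v = 0.
  apply: (lin_inj0 (@emb_inj n.+1 Z)); apply: hbZ.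
  exact: (prad_nat _ _ _ _ (embL n.+1 Z) hV hZ v (hTV v)).
have hradW : forall w, w \in @Defs.rad _ (pr_obj alpha (iter n Fa Z)) -> w = 0.
  move=> w hw.
  have hw' : w \in gen (@Defs.rad _ (pr_obj alpha (iter n Fa Z))) by apply: gen_sub.
  by have := congr1 sval (V0 (exist _ w hw')).
have hsocW := radS HR hradW.
have elin : linear (fun w : pr_obj alpha (iter n Fa Z) => embL n Z (sval w)).
  by move=> a u v; exact: (linearP (embL n Z) a (sval u) (sval v)).
pose e' : {linear pr_obj alpha (iter n Fa Z) -> Z} := mklin elin.
have hAsoc : forall x, x \in Ak n Z -> x \in @soc _ Z.
  move=> _ /imgpP[x' hx' <-].
  have hx'' : x' \in gen (prad _ alpha (iter n Fa Z)) by apply: gen_sub.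
  exact: (soc_nat e' (hsocW (exist _ x' hx''))).
have hQ := fingen_quotm (@soc _ Z) hZ.
apply/(zero_upE _ hQ) => x hx.
have := QA hZ hQ (QC (k := n) hZ hQ (qproj_surj (P := @soc _ Z))) hx.
case/imgpP=> z hz <-; apply/eqP; rewrite qproj0; apply: gen_sub; exact: hAsoc.
Qed.

Lemma StepA k N : fingen N -> zero_mod (pr_obj alpha (iter k Fa N)) ->
  zero_mod (pr_obj alpha (iter k Fa (q_obj beta N))).
Proof.
move=> hN h.
have hQ : fingen (q_obj beta N) := fingen_quotm _ hN.
apply/(zero_upE _ hQ) => x hx.
have := QA hN hQ (QC (k := k) hN hQ (qproj_surj (P := prad _ beta N))) hx.
by case/imgpP=> z hz <-; rewrite ((zero_upE _ hN).1 h z hz) linear0.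
Qed.

Lemma Claim k : forall N, fingen N -> zero_mod (pr_obj alpha (iter k Fa N)) ->
  zero_mod (q_obj beta (iter k Gb N)).
Proof.
elim: k => [|k IH] N hN h.
  apply/(zero_quotm _).2 => x.
  have hF : in_F alpha N.
    by split=> // y hy; apply: ((zero_subm _).1 h); apply: gen_sub.
  have [_ hT] := HFT hF.
  by apply: gen_sub; apply: hT.
rewrite iterSr; apply: IH.
  by apply: fingen_quotm; apply: fingen_quotm.
have hZ : fingen (q_obj beta N) := fingen_quotm _ hN.
apply: StepC => //.
  move=> z hz; apply: ((zero_subm _).1 (Hb hN)); exact: gen_sub.
exact: StepA.
Qed.

End Main.

Lemma ominnP (P : nat -> Prop) n : ominn P = Some n -> P n.
Proof.
rewrite /ominn; case: pselect => // h [<-].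
by case: ex_minnP => m /asboolP.
Qed.

Lemma ominn_le (P : nat -> Prop) m : P m -> exists n, ominn P = Some n /\ (n <= m)%N.
Proof.
move=> hm; rewrite /ominn; case: pselect => [h|hn]; last first.
  by exfalso; apply: hn; exists m; apply/asboolP.
exists (ex_minn h); split=> //.
by case: ex_minnP => k _ hk; apply: hk; apply/asboolP.
Qed.

Theorem theorem2p3 (R : pzRingType) (HR : left_artinian R)
  (alpha beta : preradical R)
  (Ha : is_radical alpha) (Hb : is_radical beta)
  (Hepi : preserves_epi alpha) :
  (forall M : lmodType R, fingen M ->
      ole (ll_low (q_obj beta) M) (ll_up (pr_obj alpha) M))
  <-> (forall M : lmodType R, in_F alpha M -> in_T beta M).
Proof.
split=> [H M [hM hF]|HFT M hM].
- split=> //.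
  have P0 : zero_mod (pr_obj alpha (iter 0 (F_obj (pr_obj alpha)) M)).
    by apply/(zero_subm _).2 => x; rewrite prad_gen //; apply: hF.
  have [n [en hn]] := ominn_le
    (P := fun i => zero_mod (pr_obj alpha (iter i (F_obj (pr_obj alpha)) M))) P0.
  have := H M hM; rewrite /ll_up en /ll_low.
  case e: (ominn _) => [j|] //= hj.
  have Q0 := ominnP e.
  have j0 : j = 0%N by apply/eqP; rewrite -leqn0 (leq_trans hj hn).
  subst j; move: Q0 => /= /(zero_quotm _).1 hq x.
  by rewrite -prad_gen //; apply: hq.
- rewrite /ll_up; case e: (ominn _) => [n|]; last by case: (ll_low _ _).
  have Pn := ominnP e.
  have Qn := Claim HR Hb Hepi HFT hM Pn.
  have [j [ej hj]] := ominn_le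
    (P := fun i => zero_mod (q_obj beta (iter i (G_obj (q_obj beta)) M))) Qn.
  by rewrite /ll_low ej.
Qed.
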